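(* Consider the cache-aided combination network described in the context with user cache size $M$ and relay cache size $N$ satisfying $0<M+rN\le D$. Then every achievable rate pair $(R_1,R_2)$ satisfies $$R_1\ge \max\left(\max_{l\in\{r,\dots,h\}}\ \max_{s\in\{1,\dots,\min(D,\binom{l}{r})\}}\frac1l\Big(s-\frac{sM+lN}{\lfloor D/s\rfloor}\Big),\ \max_{x\in\{1,\dots,\min(D,K)\}}\frac1u\Big(x-\frac{xM+uN}{\lfloor D/x\rfloor}\Big)\right),$$ where $u=\min(x+r-1,h)$, and $$R_2\ge \frac1r\Big(1-\frac MD\Big).$$
   Context: Combination network: a server holds $D$ independent files $W_1,\dots,W_D$, each uniformly distributed over $F$ bits. There are $h$ relay nodes $\Gamma_1,\dots,\Gamma_h$ and $K=\binom{h}{r}$ end users ($r<h$); each end user is connected to a distinct set of $r$ relays (one user for each $r$-subset), so each relay is connected to $\hat K=\binom{h-1}{r-1}$ users. The server is connected to every relay; all links are noiseless unicast links. Assume $K\le D$. Each end user has a cache of $MF$ bits, each relay a cache of $NF$ bits. Placement phase (before demands): relay $j$ stores $V_j$, user $k$ stores $Z_k$, functions of the files with $H(V_j)\le NF$, $H(Z_k)\le MF$. Delivery phase: user $k$ requests $W_{d_k}$ for an arbitrary demand vector $\mathbf d\in\{1,\dots,D\}^K$; the server sends relay $\Gamma_i$ a signal $X_{i,\mathbf d}$ of $R_1F$ bits; relay $\Gamma_i$ sends each connected user $k$ a signal $Y_{i,\mathbf d,k}$ of $R_2F$ bits, a function of $X_{i,\mathbf d},V_i,\mathbf d$; user $k$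 decodes from $Z_k$, $\mathbf d$ and its $r$ received signals. $(R_1,R_2)$ (normalized by $F$) is achievable if for every $\epsilon>0$ and all sufficiently large $F$ there is such a scheme with $\max_{\mathbf d,k}P(\hat W_{d_k}\ne W_{d_k})<\epsilon$. *)

(* Defs.v *)
From HB Require Import structures.
From mathcomp Require Import all_boot all_order all_algebra.
From mathcomp Require Import reals exp.
Set Implicit Arguments. Unset Strict Implicit. Unset Printing Implicit Defensive.
Import Order.TTheory GRing.Theory Num.Theory.
Local Open Scope ring_scope.

(* End users: one for each r-subset of the h relays; user k is connected
   exactly to the relays in [val k].  Hence K = #|user h r| = 'C(h, r). *)
Definition user (h r : nat) := {S : {set 'I_h} | #|S| == r}.

Definition files (D F : nat) := {ffun 'I_D -> F.-tuple bool}.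

Definition demand (h r D : nat) := {ffun user h r -> 'I_D}.

Definition prob_val (R : realType) (T : finType) (U : eqType) (f : T -> U) (y : U) : R :=
  #|[set t | f t == y]|%:R / #|T|%:R.

(* Shannon entropy in bits of the random variable f(t), t uniform on T. *)
Definition entropy2 (R : realType) (T : finType) (U : eqType) (f : T -> U) : R :=
  \sum_(y <- undup (map f (enum T)))
     - (prob_val R f y * (ln (prob_val R f y) / ln 2)).

Record scheme (R : realType) (h r D F : nat) (M N R1 R2 : R) := Scheme {
  n1 : nat;                      (* length in bits of server->relay signals *)
  n2 : nat;                      (* length in bits of relay->user signals *)
  n1_le : n1%:R <= R1 * F%:R;
  n2_le : n2%:R <= R2 * F%:R;
  relay_cache : 'I_h -> files D F -> nat;
  user_cache : user h r -> files D F -> nat;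
  relay_cache_ok : forall j, entropy2 R (relay_cache j) <= N * F%:R;
  user_cache_ok : forall k, entropy2 R (user_cache k) <= M * F%:R;
  server_sig : 'I_h -> demand h r D -> files D F -> n1.-tuple bool;
  relay_sig : 'I_h -> demand h r D -> user h r -> n1.-tuple bool -> nat -> n2.-tuple bool;
  decoder : user h r -> demand h r D -> nat -> {ffun 'I_h -> n2.-tuple bool} -> F.-tuple bool
}.

Arguments relay_cache {R h r D F M N R1 R2} s _ _.
Arguments user_cache {R h r D F M N R1 R2} s _ _.
Arguments server_sig {R h r D F M N R1 R2} s _ _ _.
Arguments relay_sig {R h r D F M N R1 R2} s _ _ _ _ _.
Arguments decoder {R h r D F M N R1 R2} s _ _ _ _.

(* The signals received by user k: entries for relays not connected to k are
   a fixed constant, so the decoder only uses the r connected relays. *)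
Definition received (R : realType) h r D F (M N R1 R2 : R)
  (sc : scheme h r D F M N R1 R2) (k : user h r) (d : demand h r D) (w : files D F)
  : {ffun 'I_h -> (n2 sc).-tuple bool} :=
  [ffun i => if i \in val k
             then relay_sig sc i d k (server_sig sc i d w) (relay_cache sc i w)
             else [tuple false | _ < n2 sc]].

Definition err_prob (R : realType) h r D F (M N R1 R2 : R)
  (sc : scheme h r D F M N R1 R2) (k : user h r) (d : demand h r D) : R :=
  #|[set w : files D F |
      decoder sc k d (user_cache sc k w) (received sc k d w) != w (d k)]|%:R
  / #|{: files D F}|%:R.

Definition achievable (R : realType) (h r D : nat) (M N R1 R2 : R) : Prop :=
  forall eps : R, 0 < eps ->
  exists F0 : nat, forall F : nat, (F0 <= F)%N ->
  exists sc : scheme h r D F M N R1 R2,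
    forall (k : user h r) (d : demand h r D), err_prob sc k d < eps.

(* Main.v *)
Require Import Defs.
From HB Require Import structures.
From mathcomp Require Import all_boot all_order all_algebra.
From mathcomp Require Import reals exp.
From mathcomp Require Import ring lra zify.
Import Order.TTheory GRing.Theory Num.Theory.
Local Open Scope ring_scope.
Set Implicit Arguments. Unset Strict Implicit.

Section Ent.
Context (R : realType) (T : finType).

Definition cnt (U : eqType) (f : T -> U) (t : T) : nat := #|[set t' | f t' == f t]|.
Definition Hn (U : eqType) (f : T -> U) : R :=
  \sum_t (ln (#|T|%:R) - ln ((cnt f t)%:R)).

Lemma cnt_gt0 (U : eqType) (f : T -> U) t : (0 < cnt f t)%N.
Proof. by apply/card_gt0P; exists t; rewrite inE. Qed.

Lemma part_undup (U : eqType) (f : T -> U) (G : T -> R) :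
  \sum_t G t = \sum_(y <- undup (map f (enum T))) \sum_(t | f t == y) G t.
Proof.
under [RHS]eq_bigr do rewrite big_mkcond.
rewrite [RHS]exchange_big /=; apply: eq_bigr => t _.
rewrite -big_mkcond -big_filter.
have -> : [seq y <- undup (map f (enum T)) | f t == y] = [:: f t].
  rewrite -(filter_pred1_uniq (undup_uniq (map f (enum T)))); last first.
    by rewrite mem_undup; apply: map_f; rewrite mem_enum.
  by apply: eq_filter => y /=; rewrite eq_sym.
by rewrite big_seq1.
Qed.

Lemma entropyE (U : eqType) (f : T -> U) :
  entropy2 R f = Hn f / (#|T|%:R * ln 2).
Proof.
rewrite /Hn (part_undup f) /entropy2 mulr_suml; apply: eq_big_seq => y.
rewrite mem_undup => /mapP [t0 _ ->].
have cE : forall t, f t == f t0 -> cnt f t = #|[set t' | f t' == f t0]|.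
  by move=> t /eqP ft; rewrite /cnt ft.
rewrite (eq_bigr (fun _ => ln #|T|%:R - ln (cnt f t0)%:R)); last first.
  by move=> t /cE ->.
rewrite sumr_const.
have -> : #|[pred t | f t == f t0]| = cnt f t0.
  by apply: eq_card => t; rewrite /cnt inE.
rewrite /prob_val.
have c0 := cnt_gt0 f t0.
have T0 : (0 < #|T|)%N by apply/card_gt0P; exists t0.
have -> : #|[set t | f t == f t0]| = cnt f t0 by [].
have cR : 0 < (cnt f t0)%:R :> R by rewrite ltr0n.
have TR : 0 < #|T|%:R :> R by rewrite ltr0n.
have l2 : 0 < ln 2 :> R by apply: ln_gt0; rewrite ltr1n.
rewrite ln_div ?posrE // -mulr_natl.
field.
by rewrite !lt0r_neq0.
Qed.


Lemma ln_le_sub1 (x : R) : 0 < x -> ln x <= x - 1.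
Proof.
move=> x0; have := @le_ln1Dx R (x - 1).
rewrite addrCA subrr addr0; apply; lra.
Qed.

Lemma jensen_ln (A : {pred T}) (a : T -> R) :
  (0 < #|A|)%N -> (forall t, t \in A -> 0 < a t) ->
  \sum_(t in A) ln (a t) <= #|A|%:R * ln ((\sum_(t in A) a t) / #|A|%:R).
Proof.
move=> A0 apos.
set m := (\sum_(t in A) a t) / #|A|%:R.
have nR : 0 < #|A|%:R :> R by rewrite ltr0n.
have S0 : 0 < \sum_(t in A) a t.
  case/card_gt0P: A0 => t0 t0A.
  rewrite (bigD1 t0) //=; apply: ltr_wpDr; last exact: apos.
  by apply: sumr_ge0 => i /andP [iA _]; apply/ltW/apos.
have m0 : 0 < m by rewrite /m divr_gt0.
have step : forall t, t \in A -> ln (a t) <= a t / m - 1 + ln m.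
  move=> t tA; have at0 := apos t tA.
  have := ln_le_sub1 (divr_gt0 at0 m0).
  by rewrite ln_div ?posrE //; lra.
apply: le_trans (ler_sum _ step) _.
rewrite big_split /= big_split /= sumr_const -mulr_suml sumr_const.
have -> : (\sum_(t in A) a t) / m = #|A|%:R.
  rewrite /m invfM invrK mulrA mulfV ?mul1r //; exact: lt0r_neq0.
rewrite -mulr_natl -[ln m *+ _]mulr_natl; lra.
Qed.

Lemma cnt_le_det (U V : eqType) (f : T -> U) (g : T -> V) t :
  (forall t1 t2, g t1 = g t2 -> f t1 = f t2) -> (cnt g t <= cnt f t)%N.
Proof.
move=> det; apply: subset_leq_card; apply/subsetP => t'.
by rewrite !inE => /eqP /det ->.
Qed.

Lemma Hn_det (U V : eqType) (f : T -> U) (g : T -> V) :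
  (forall t1 t2, g t1 = g t2 -> f t1 = f t2) -> Hn f <= Hn g.
Proof.
move=> det; apply: ler_sum => t _; rewrite lerD2l lerN2.
rewrite ler_ln ?posrE ?ltr0n ?cnt_gt0 // ler_nat; exact: cnt_le_det.
Qed.

Lemma Hn_const (U : eqType) (c : U) : Hn (fun _ : T => c) = 0.
Proof.
rewrite /Hn big1 // => t _.
have -> : cnt (fun _ : T => c) t = #|T|.
  by rewrite /cnt; apply: eq_card => t'; rewrite !inE eqxx.
by rewrite subrr.
Qed.

Lemma sum_inv_le1 (A : {pred T}) (c : T -> nat) :
  (forall t, t \in A -> c t = #|A|) -> \sum_(t in A) ((c t)%:R)^-1 <= 1 :> R.
Proof.
move=> cA; rewrite (eq_bigr (fun _ => (#|A|%:R)^-1)); last by move=> t /cA ->.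
rewrite sumr_const -(mulr_natr ((#|A|%:R)^-1)).
case: (posnP #|A|) => [-> | A0]; first by rewrite mulr0 ler01.
by rewrite mulVf // pnatr_eq0 -lt0n.
Qed.

Lemma sum_inv_cnt_fin (V : finType) (f : T -> V) :
  \sum_t ((cnt f t)%:R)^-1 <= #|V|%:R :> R.
Proof.
rewrite (partition_big f predT) //=.
rewrite -sumr_const; apply: ler_sum => v _.
apply: (@sum_inv_le1 [pred t | f t == v]) => t /= /eqP ftv.
by rewrite /cnt ftv; apply: eq_card => t'; rewrite inE.
Qed.

End Ent.

Section Ent2.
Context (R : realType) (T : finType).
Local Notation Hn := (@Hn R T).

Lemma jensen_all (a : T -> R) :
  (0 < #|T|)%N -> (forall t, 0 < a t) ->
  \sum_t ln (a t) <= #|T|%:R * ln ((\sum_t a t) / #|T|%:R).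
Proof.
move=> T0 apos; have := @jensen_ln R T predT a.
move=> /(_ T0 (fun t _ => apos t)). 
by [].
Qed.

Lemma Hn_fin (V : finType) (f : T -> V) :
  Hn f <= #|T|%:R * ln (#|V|%:R).
Proof.
case: (posnP #|T|) => [T0 | T0].
  rewrite T0 mul0r /Hn big1 // => t _.
  by have := card0_eq T0 t; rewrite inE.
have V0 : (0 < #|V|)%N.
  by case/card_gt0P: T0 => t _; apply/card_gt0P; exists (f t).
have TR : 0 < #|T|%:R :> R by rewrite ltr0n.
have cR : forall t, 0 < (cnt f t)%:R :> R by move=> t; rewrite ltr0n cnt_gt0.
rewrite /Hn (eq_bigr (fun t => ln (#|T|%:R / (cnt f t)%:R))); last first.
  by move=> t _; rewrite ln_div ?posrE.
have J := jensen_all (a := fun t => #|T|%:R / (cnt f t)%:R) T0 (fun t => divr_gt0 TR (cR t)).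
apply: (le_trans J).
rewrite ler_wpM2l ?ler0n // ler_ln ?posrE; first last.
- by rewrite ltr0n.
- apply: divr_gt0 => //; case/card_gt0P: (T0) => t0 _; rewrite (bigD1 t0) //=.
  apply: ltr_pwDl; first exact: divr_gt0.
  by apply: sumr_ge0 => t _; apply/ltW/divr_gt0.
rewrite -mulr_sumr mulrC mulrA mulVf ?mul1r; last exact: lt0r_neq0.
exact: sum_inv_cnt_fin.
Qed.

Lemma Hn_T0 (U : eqType) (f : T -> U) : #|T| = 0%N -> Hn f = 0.
Proof. by move=> T0; rewrite /Hn big1 // => t _; have := card0_eq T0 t; rewrite inE. Qed.

Lemma cntE (U : eqType) (f : T -> U) t :
  (cnt f t)%:R = \sum_t1 ((f t1 == f t)%:R : R).
Proof.
rewrite /cnt -sumr_const big_mkcond /=; apply: eq_bigr => t1 _.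
by rewrite inE; case: (f t1 == f t).
Qed.

Lemma pair_count (U V : eqType) (f : T -> U) (g : T -> V) :
  \sum_t ((cnt f t)%:R * (cnt g t)%:R / (cnt (fun t => (f t, g t)) t)%:R)
    <= #|T|%:R * #|T|%:R :> R.
Proof.
have -> : \sum_t ((cnt f t)%:R * (cnt g t)%:R / (cnt (fun t => (f t, g t)) t)%:R)
   = \sum_t1 \sum_t2 \sum_t ((f t1 == f t)%:R * (g t2 == g t)%:R
        / (cnt (fun t => (f t, g t)) t)%:R) :> R.
  symmetry; under eq_bigr do rewrite exchange_big /=.
  rewrite exchange_big /=; apply: eq_bigr => t _.
  rewrite (cntE f) (cntE g) mulr_suml mulr_suml; apply: eq_bigr => t1 _.
  by rewrite mulr_sumr mulr_suml.
apply: le_trans (_ : \sum_(t1 : T) \sum_(t2 : T) (1 : R) <= _); last first.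
  by rewrite sumr_const sumr_const -(mulr_natr (#|xpredT|%:R)).
apply: ler_sum => t1 _; apply: ler_sum => t2 _.
pose A := [pred t | (f t == f t1) && (g t == g t2)].
apply: le_trans (_ : \sum_(t in A) ((cnt (fun t => (f t, g t)) t)%:R)^-1 <= _).
  rewrite [X in _ <= X]big_mkcond /=; apply: ler_sum => t _.
  rewrite inE eq_sym (eq_sym (g t2)).
  by case: (f t == f t1); case: (g t == g t2); rewrite ?mul1r ?mul0r.
apply: sum_inv_le1 => t; rewrite inE => /andP [/eqP e1 /eqP e2].
rewrite /cnt; apply: eq_card => t'; rewrite !inE xpair_eqE e1 e2 //.
Qed.

Lemma Hn_pair (U V : eqType) (f : T -> U) (g : T -> V) :
  Hn (fun t => (f t, g t)) <= Hn f + Hn g.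
Proof.
case: (posnP #|T|) => [T0 | T0]; first by rewrite !Hn_T0 // addr0.
set fg := fun t => (f t, g t).
have TR : 0 < #|T|%:R :> R by rewrite ltr0n.
have cR : forall (W : eqType) (k : T -> W) t, 0 < (cnt k t)%:R :> R.
  by move=> W k t; rewrite ltr0n cnt_gt0.
pose a t := (cnt f t)%:R * (cnt g t)%:R / (#|T|%:R * (cnt fg t)%:R) : R.
have apos : forall t, 0 < a t.
  by move=> t; rewrite /a; apply: divr_gt0; apply: mulr_gt0.
have E : Hn f + Hn g - Hn fg = - \sum_t ln (a t).
  rewrite /Hn -big_split -sumrB -sumrN; apply: eq_bigr => t _.
  rewrite /a ln_div ?posrE ?mulr_gt0 // !lnM ?posrE //=; lra.
have J := jensen_all (a := a) T0 apos.
have S : (\sum_t a t) / #|T|%:R <= 1.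
  rewrite ler_pdivrMr // mul1r.
  rewrite (eq_bigr (fun t => ((cnt f t)%:R * (cnt g t)%:R / (cnt fg t)%:R) / #|T|%:R)); last first.
    by move=> t _; rewrite /a invfM; field; rewrite !lt0r_neq0.
  rewrite -mulr_suml ler_pdivrMr //.
  exact: pair_count.
have L0 : ln ((\sum_t a t) / #|T|%:R) <= 0.
  by apply: ln_le0.
have : \sum_t ln (a t) <= 0.
  apply: le_trans J _; apply: mulr_ge0_le0 => //; exact: ltW.
move: E; rewrite -/fg; lra.
Qed.

Lemma Hn_family (I : Type) (U : eqType) (comp : I -> T -> U) (s : seq I) :
  Hn (fun t => map (comp^~ t) s) <= \sum_(i <- s) Hn (comp i).
Proof.
elim: s => [|i s IH].
  by rewrite big_nil (Hn_const R T [::]).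
rewrite big_cons.
apply: le_trans (_ : Hn (fun t => (comp i t, map (comp^~ t) s)) <= _).
  by apply: Hn_det => t1 t2 [e1 e2] /=; rewrite e1 e2.
apply: le_trans (Hn_pair _ _) _; exact: lerD.
Qed.

Lemma Hn_id : Hn (fun t : T => t) = #|T|%:R * ln (#|T|%:R).
Proof.
have c1 : forall t, cnt (fun t : T => t) t = 1%N.
  move=> t; rewrite /cnt -(cards1 t); apply: eq_card => t'; rewrite !inE.
  by [].
rewrite /Hn (eq_bigr (fun _ => ln #|T|%:R)); last by move=> t _; rewrite c1 ln1 subr0.
by rewrite sumr_const mulr_natl.
Qed.

Lemma kln_le (k n : nat) : (k <= n)%N ->
  k%:R * (ln (n%:R) - ln (k%:R)) <= n%:R :> R.
Proof.
move=> kn; case: (posnP k) => [-> | k0]; first by rewrite mul0r ler0n.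
have kR : 0 < k%:R :> R by rewrite ltr0n.
have nR : 0 < n%:R :> R by rewrite ltr0n (leq_trans k0).
rewrite -ln_div ?posrE //.
have := ln_le_sub1 (divr_gt0 nR kR) => H.
apply: le_trans (ler_wpM2l (ltW kR) H) _.
rewrite mulrBr mulr1 mulrC divfK ?lt0r_neq0 //; lra.
Qed.


Lemma Hn_fano (V : finType) (U : eqType) (Y est : T -> V) (Phi : T -> U) :
  (forall t1 t2, Phi t1 = Phi t2 -> est t1 = est t2) ->
  Hn Y <= Hn Phi + 2 * #|T|%:R
          + #|[pred t | est t != Y t]|%:R * ln ((#|V|.+1)%:R).
Proof.
move=> detE.
pose E t := if est t == Y t then None else Some (Y t).
apply: le_trans (_ : Hn (fun t => (Phi t, E t)) <= _).
  apply: Hn_det => t1 t2 [e1 e2]; have ee := detE _ _ e1; move: e2; rewrite /E.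
  case: eqP => h1; case: eqP => h2 //=; last by case.
  by rewrite -h1 -h2 ee.
apply: le_trans (Hn_pair _ _) _; rewrite -addrA lerD2l.
pose B := [pred t | est t != Y t].
have cG : forall t, est t == Y t -> cnt E t = #|[pred t | est t == Y t]|.
  move=> t et; rewrite /cnt /E et; apply: eq_card => t'; rewrite !inE.
  by case: (est t' == Y t').
have -> : 2 * #|T|%:R = #|T|%:R + #|T|%:R :> R by ring.
rewrite /Hn (bigID (fun t => est t == Y t)) /= -addrA.
apply: lerD.
  rewrite (eq_bigr (fun _ => ln #|T|%:R - ln (#|[pred t | est t == Y t]|)%:R)); last first.
    by move=> t /cG ->.
  rewrite sumr_const.
  have := kln_le (max_card [pred t | est t == Y t]).
  by rewrite mulr_natl.
case: (posnP #|B|) => [B0 | B0].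
  rewrite big_pred0; first by rewrite -/B B0 mul0r addr0 ler0n.
  by move=> t; have := card0_eq B0 t; rewrite !inE.
have TR : 0 < #|T|%:R :> R.
  by rewrite ltr0n; case/card_gt0P: B0 => t _; apply/card_gt0P; exists t.
have cR : forall t, 0 < (cnt E t)%:R :> R by move=> t; rewrite ltr0n cnt_gt0.
have BR : 0 < #|B|%:R :> R by rewrite ltr0n.
rewrite (eq_bigr (fun t => ln (#|T|%:R / (cnt E t)%:R))); last first.
  by move=> t _; rewrite ln_div ?posrE.
have J := @jensen_ln R T B (fun t => #|T|%:R / (cnt E t)%:R) B0
   (fun t _ => divr_gt0 TR (cR t)).
apply: le_trans J _.
have S1 : \sum_(t in B) ((cnt E t)%:R)^-1 <= (#|V|.+1)%:R :> R.
  apply: le_trans (_ : \sum_t ((cnt E t)%:R)^-1 <= _).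
    rewrite [X in _ <= X](bigID (mem B)) /= lerDl.
    by apply: sumr_ge0 => t _; rewrite invr_ge0 ler0n.
  by have := sum_inv_cnt_fin R E; rewrite card_option.
have S0 : 0 < \sum_(t in B) ((cnt E t)%:R)^-1 :> R.
  case/card_gt0P: B0 => t0 t0B; rewrite (bigD1 t0) //=.
  apply: ltr_pwDl; first by rewrite invr_gt0.
  by apply: sumr_ge0 => t _; rewrite invr_ge0 ler0n.
rewrite -mulr_sumr.
have VR : 0 < (#|V|.+1)%:R :> R by rewrite ltr0n.
apply: le_trans (_ : #|B|%:R * ln (#|T|%:R * (#|V|.+1)%:R / #|B|%:R) <= _).
  rewrite ler_wpM2l ?ler0n // ler_ln ?posrE; last 2 first.
  - by rewrite divr_gt0 // mulr_gt0.
  - by rewrite divr_gt0 // mulr_gt0.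
  by rewrite ler_pM2r ?invr_gt0 // ler_pM2l.
rewrite ln_div ?posrE ?mulr_gt0 // lnM ?posrE //.
have K := kln_le (max_card B).
rewrite -/B; move: K; rewrite -[#|predT|]/#|T|.
set x := ln (#|V|.+1)%:R; lra.
Qed.

End Ent2.

Section Ent3.
Context (R : realType) (T : finType).
Hypothesis T0 : (0 < #|T|)%N.

Local Notation H := (entropy2 R).

Lemma ln2_gt0 : 0 < ln 2 :> R.
Proof. by apply: ln_gt0; rewrite ltr1n. Qed.

Let TR : 0 < #|T|%:R :> R. Proof. by rewrite ltr0n. Qed.
Let KR : 0 < #|T|%:R * ln 2 :> R. Proof. by rewrite mulr_gt0 // ln2_gt0. Qed.

Lemma H_det (U V : eqType) (f : T -> U) (g : T -> V) :
  (forall t1 t2, g t1 = g t2 -> f t1 = f t2) -> H f <= H g.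
Proof.
by move=> det; rewrite !entropyE ler_pM2r ?invr_gt0 //; apply: Hn_det.
Qed.

Lemma H_pair (U V : eqType) (f : T -> U) (g : T -> V) :
  H (fun t => (f t, g t)) <= H f + H g.
Proof.
by rewrite !entropyE -mulrDl ler_pM2r ?invr_gt0 //; apply: Hn_pair.
Qed.

Lemma H_family (I : Type) (U : eqType) (comp : I -> T -> U) (s : seq I) :
  H (fun t => map (comp^~ t) s) <= \sum_(i <- s) H (comp i).
Proof.
rewrite entropyE.
under eq_bigr do rewrite entropyE.
rewrite -mulr_suml ler_pM2r ?invr_gt0 //; exact: Hn_family.
Qed.

Lemma H_tuple (n : nat) (f : T -> n.-tuple bool) : H f <= n%:R.
Proof.
rewrite entropyE ler_pdivrMr // (le_trans (Hn_fin _ f)) //.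
rewrite card_tuple card_bool natrX lnXn ?ltr0n // -[ln 2 *+ n]mulr_natl.
by rewrite le_eqVlt; apply/orP; left; apply/eqP; ring.
Qed.

End Ent3.

Section Cut.
Context (R : realType) (D F : nat).
Local Notation T := (files D F).
Local Notation H := (entropy2 R).

Lemma card_files : #|{: T}| = (2 ^ (F * D))%N.
Proof. by rewrite card_ffun card_tuple card_bool card_ord expnM. Qed.

Lemma files_T0 : (0 < #|{: T}|)%N.
Proof. by rewrite card_files expn_gt0. Qed.

Let TR : 0 < #|{: T}|%:R :> R. Proof. by rewrite ltr0n files_T0. Qed.
Let l2 : 0 < ln 2 :> R := ln2_gt0 R.

Lemma H_id : H (fun w : T => w) = (F * D)%:R.
Proof.
rewrite entropyE Hn_id card_files natrX lnXn ?ltr0n // -[ln 2 *+ _]mulr_natl.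
by field; rewrite lt0r_neq0 //= expf_neq0 // pnatr_eq0.
Qed.

Lemma HY_lower (P : finType) (sg : P -> 'I_D) : injective sg ->
  (#|P| * F)%:R <= H (fun w : T => [ffun p => w (sg p)]).
Proof.
move=> inj.
pose rest := enum [pred i | i \notin codom sg].
have srest : size rest = (D - #|P|)%N.
  have c1 : #|[pred i | i \in codom sg]| = #|P|.
    by rewrite -(card_codom inj); apply: eq_card.
  have e := cardC [pred i | i \in codom sg]; rewrite c1 card_ord in e.
  rewrite -cardE.
  have e2 : #|[pred i | i \notin codom sg]| = #|[predC [pred i | i \in codom sg]]|.
    by apply: eq_card.
  rewrite e2; apply/eqP; rewrite -(eqn_add2l #|P|) subnKC ?e //.
  by rewrite -e leq_addr.
have PD : (#|P| <= D)%N.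
  by have := leq_card sg inj; rewrite card_ord.
have Hrest : H (fun w : T => map (fun i => w i) rest) <= ((D - #|P|) * F)%:R.
  apply: le_trans (H_family R files_T0 (fun i (w : T) => w i) rest) _.
  apply: le_trans (_ : \sum_(i <- rest) (F%:R : R) <= _).
    apply: ler_sum => i _; exact: (@H_tuple R _ files_T0 F (fun w : T => w i)).
  by rewrite big_const_seq -Monoid.iteropE /= -srest natrM mulr_natl.
have Hdet : H (fun w : T => w) <=
    H (fun w : T => ([ffun p => w (sg p)], map (fun i => w i) rest)).
  apply: (H_det R files_T0) => w1 w2 [e1 e2]; apply/ffunP => i.
  case: (boolP (i \in codom sg)) => [/codomP [p ->] | ni].
    by have := congr1 (fun f : {ffun P -> F.-tuple bool} => f p) e1; rewrite !ffunE.
  have : i \in rest by rewrite mem_enum.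
  by move: i {ni}; apply/eq_in_map.
have := le_trans Hdet (H_pair R files_T0 _ _).
rewrite H_id; move: Hrest.
rewrite !natrM natrB //.
set a := H (fun w : T => [ffun p => w (sg p)]).
set b := H (fun w : T => [seq w i | i <- rest]).
set x := #|P|%:R; set f := F%:R; set d := D%:R.
move=> h1 h2; have -> : x * f = f * d - (d - x) * f by ring.
lra.
Qed.


Lemma cutset (P : finType) (sg : P -> 'I_D) (U : eqType) (Phi : T -> U)
    (est : T -> {ffun P -> F.-tuple bool}) :
  injective sg ->
  (forall w1 w2, Phi w1 = Phi w2 -> est w1 = est w2) ->
  (#|P| * F)%:R <= H Phi + 2 / ln 2
     + #|[pred w | est w != [ffun p => w (sg p)]]|%:R / #|{: T}|%:R
       * ((#|P| * F).+1)%:R.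
Proof.
move=> inj det.
have hf := Hn_fano R (fun w : T => [ffun p => w (sg p)]) det.
have hy := HY_lower inj.
rewrite !entropyE in hy *.
set B := #|[pred w | est w != [ffun p => w (sg p)]]|%:R in hf *.
have lnV : ln (#|{: {ffun P -> F.-tuple bool}}|.+1)%:R <= ((#|P| * F).+1)%:R * ln 2 :> R.
  rewrite card_ffun card_tuple card_bool -expnM.
  have le : ((2 ^ (F * #|P|)).+1 <= 2 ^ (#|P| * F).+1)%N.
    by rewrite expnS mul2n -addnn mulnC -add1n leq_add2r expn_gt0.
  apply: le_trans (_ : ln (2 ^ (#|P| * F).+1)%:R <= _).
    by rewrite ler_ln ?posrE ?ltr0n ?expn_gt0 // ler_nat.
  by rewrite natrX lnXn ?ltr0n // mulr_natl.
have B0 : 0 <= B by rewrite ler0n.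
have hf2 : Hn R (fun w : T => [ffun p => w (sg p)]) <= Hn R Phi + 2 * #|{: T}|%:R
      + B * (((#|P| * F).+1)%:R * ln 2).
  apply: le_trans hf _; rewrite lerD2l; exact: ler_wpM2l.
move: hy; set X := Hn R _ => hy.
have K0 : 0 < #|{: T}|%:R * ln 2 :> R by rewrite mulr_gt0.
apply: le_trans hy _.
rewrite ler_pdivrMr //.
apply: le_trans hf2 _.
rewrite le_eqVlt; apply/orP; left; apply/eqP.
by field; rewrite !lt0r_neq0.
Qed.
End Cut.

Lemma limit_arg (R : realType) (c b k : R) : 0 <= k -> 0 <= c ->
  (forall eps : R, 0 < eps -> exists F0 : nat, forall F : nat, (F0 <= F)%N ->
     c * F%:R <= b * F%:R + 2 / ln 2 + k * eps * (c * F%:R + 1)) -> c <= b.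
Proof.
move=> k0 c0 Hl; rewrite leNgt; apply/negP => bc.
set d := c - b.
have d0 : 0 < d by rewrite /d subr_gt0.
set a := k * (c + 1).
have a0 : 0 <= a by rewrite mulr_ge0 // addr_ge0.
set eps := d / (2 * (a + 1)).
have a10 : 0 < a + 1 by rewrite ltr_pwDr.
have e0 : 0 < eps by rewrite /eps divr_gt0 // mulr_gt0.
have keps : k * eps * (c + 1) <= d / 2.
  have -> : k * eps * (c + 1) = d / 2 * (a / (a + 1)).
    by rewrite /eps /a; field; rewrite lt0r_neq0.
  rewrite -[X in _ <= X]mulr1 ler_wpM2l ?divr_ge0 ?ltW //.
  by rewrite ltr_pdivrMr // mul1r ltrDl.
have [F0 HF] := Hl eps e0.
pose F := maxn F0 (Num.truncn (4 / (ln 2 * d))).+1.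
have FF0 : (F0 <= F)%N by rewrite leq_maxl.
have l2 : 0 < ln 2 :> R := ln2_gt0 R.
have FR : 4 / (ln 2 * d) < F%:R.
  have t := truncnS_gt (4 / (ln 2 * d)); apply: lt_le_trans t _.
  by rewrite ler_nat; exact: leq_maxr.
have F0R : 0 < F%:R :> R.
  by rewrite ltr0n /F; apply: leq_trans (leq_maxr _ _).
have := HF F FF0.
have small : 2 / ln 2 < d / 2 * F%:R.
  have ld : 0 < ln 2 * d by rewrite mulr_gt0.
  move: FR; rewrite ltr_pdivrMr // => FR.
  rewrite ltr_pdivrMr //; move: FR; nra.
have k1 : k * eps * (c * F%:R + 1) <= d / 2 * F%:R.
  apply: le_trans (_ : k * eps * ((c + 1) * F%:R) <= _).
    apply: ler_wpM2l; first by rewrite mulr_ge0 // ltW.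
    have F1 : 1 <= F%:R :> R by rewrite ler1n -(ltr0n R).
    nra.
  rewrite mulrA; apply: ler_wpM2r; first exact: ltW.
  exact: keps.
rewrite /d in small k1; nra.
Qed.

Lemma card_union_le (R : realType) (T P : finType) (A : {pred T}) (B : P -> {pred T}) :
  (forall t, t \in A -> exists p, t \in B p) -> #|A|%:R <= \sum_p #|B p|%:R :> R.
Proof.
move=> cov.
have cE : forall C : {pred T}, #|C|%:R = \sum_t ((t \in C)%:R : R).
  move=> C; rewrite -sumr_const big_mkcond /=; apply: eq_bigr => t _.
  by case: (t \in C).
rewrite cE; under [X in _ <= X]eq_bigr do rewrite cE.
rewrite [X in _ <= X]exchange_big /=; apply: ler_sum => t _.
case: (boolP (t \in A)) => tA; last by apply: sumr_ge0 => p _; rewrite ler0n.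
have [p tp] := cov t tA.
rewrite (bigD1 p) //= tp lerDl.
by apply: sumr_ge0 => q _; rewrite ler0n.
Qed.

Section Sch.
Context (R : realType) (h r D F : nat) (M N R1 R2 : R).
Variable sc : scheme h r D F M N R1 R2.
Local Notation T := (files D F).
Local Notation H := (entropy2 R).

Lemma scheme_cut (P : finType) (k : P -> user h r) (d : P -> demand h r D)
    (U : eqType) (Phi : T -> U) (eps : R) :
  injective (fun p => d p (k p)) ->
  (forall w1 w2, Phi w1 = Phi w2 -> forall p,
      user_cache sc (k p) w1 = user_cache sc (k p) w2 /\
      received sc (k p) (d p) w1 = received sc (k p) (d p) w2) ->
  (forall p, err_prob sc (k p) (d p) < eps) ->
  (#|P| * F)%:R <= H Phi + 2 / ln 2 + #|P|%:R * eps * ((#|P| * F).+1)%:R.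
Proof.
move=> inj det err.
pose est w := [ffun p => decoder sc (k p) (d p) (user_cache sc (k p) w)
                           (received sc (k p) (d p) w)] : {ffun P -> F.-tuple bool}.
have detE : forall w1 w2, Phi w1 = Phi w2 -> est w1 = est w2.
  move=> w1 w2 e; apply/ffunP => p; rewrite !ffunE.
  by have [-> ->] := det _ _ e p.
have C := cutset R inj detE.
apply: le_trans C _; rewrite lerD2l.
apply: ler_wpM2r; first by rewrite ler0n.
have TR : 0 < #|{: T}|%:R :> R by rewrite ltr0n files_T0.
rewrite ler_pdivrMr //.
apply: le_trans (card_union_le R
   (B := fun p => [pred w : T | decoder sc (k p) (d p) (user_cache sc (k p) w)
                           (received sc (k p) (d p) w) != w (d p (k p))]) _) _.
  move=> w; rewrite inE => /eqP ne.
  have [p /eqP hp] : exists p, est w p != w (d p (k p)).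
    apply/existsP; rewrite -negb_forall; apply/negP => /forallP al.
    by apply: ne; apply/ffunP => p; rewrite [RHS]ffunE; apply/eqP.
  by exists p; rewrite inE; apply/eqP; move: hp; rewrite ffunE.
have -> : #|P|%:R * eps * #|{: T}|%:R = \sum_(p : P) (eps * #|{: T}|%:R).
  by rewrite sumr_const -mulrA mulr_natl.
apply: ler_sum => p _.
have := err p; rewrite /err_prob ltr_pdivrMr // => /ltW.
by congr (_ <= _); congr (_%:R); apply: eq_card => w; rewrite !inE.
Qed.


Let T0 := @files_T0 D F.

Lemma sum_const_seq (I : Type) (s : seq I) (c : R) : \sum_(i <- s) c = (size s)%:R * c.
Proof. by rewrite big_const_seq count_predT -Monoid.iteropE /= mulr_natl. Qed.

Definition Phi1 (sX : seq ('I_h * demand h r D)) (sV : seq 'I_h) (sZ : seq (user h r))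
  (w : T) :=
  (map (fun x => server_sig sc x.1 x.2 w) sX,
   (map (fun i => relay_cache sc i w) sV, map (fun u => user_cache sc u w) sZ)).

Lemma phi1_det (sX : seq ('I_h * demand h r D)) (sV : seq 'I_h) (sZ : seq (user h r)) (P : finType) (k : P -> user h r) (d : P -> demand h r D) :
  (forall p, k p \in sZ) ->
  (forall p i, i \in val (k p) -> (i \in sV) && ((i, d p) \in sX)) ->
  forall w1 w2, Phi1 sX sV sZ w1 = Phi1 sX sV sZ w2 -> forall p,
      user_cache sc (k p) w1 = user_cache sc (k p) w2 /\
      received sc (k p) (d p) w1 = received sc (k p) (d p) w2.
Proof.
move=> hZ hi w1 w2 [/eq_in_map eX /eq_in_map eV /eq_in_map eZ] p.
split; first exact: eZ.
apply/ffunP => i; rewrite !ffunE; case: ifP => // ik.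
have /andP [iV iX] := hi p i ik.
by rewrite (eV i iV) (eX (i, d p) iX).
Qed.

Lemma phi1_H (sX : seq ('I_h * demand h r D)) (sV : seq 'I_h) (sZ : seq (user h r)) :
  H (Phi1 sX sV sZ) <= (size sX)%:R * (R1 * F%:R) + (size sV)%:R * (N * F%:R)
                        + (size sZ)%:R * (M * F%:R).
Proof.
apply: le_trans (H_pair R T0 _ _) _; rewrite -addrA; apply: lerD.
  apply: le_trans (H_family R T0 _ _) _; rewrite -sum_const_seq; apply: ler_sum => x _.
  apply: le_trans (H_tuple R T0 _) _; exact: n1_le.
apply: le_trans (H_pair R T0 _ _) _; apply: lerD.
  apply: le_trans (H_family R T0 _ _) _; rewrite -sum_const_seq; apply: ler_sum => x _.
  exact: relay_cache_ok.
apply: le_trans (H_family R T0 _ _) _; rewrite -sum_const_seq; apply: ler_sum => x _.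
exact: user_cache_ok.
Qed.

Definition Phi2 (k0 : user h r) (sY : seq ('I_h * demand h r D)) (w : T) :=
  (map (fun x => relay_sig sc x.1 x.2 k0 (server_sig sc x.1 x.2 w) (relay_cache sc x.1 w)) sY,
   user_cache sc k0 w).

Lemma phi2_det (k0 : user h r) (sY : seq ('I_h * demand h r D)) (P : finType) (d : P -> demand h r D) :
  (forall p i, i \in val k0 -> (i, d p) \in sY) ->
  forall w1 w2, Phi2 k0 sY w1 = Phi2 k0 sY w2 -> forall p,
      user_cache sc k0 w1 = user_cache sc k0 w2 /\
      received sc k0 (d p) w1 = received sc k0 (d p) w2.
Proof.
move=> hi w1 w2 [/eq_in_map eY eZ] p.
split; first exact: eZ.
apply/ffunP => i; rewrite !ffunE; case: ifP => // ik.
exact: (eY (i, d p) (hi p i ik)).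
Qed.

Lemma phi2_H (k0 : user h r) (sY : seq ('I_h * demand h r D)) :
  H (Phi2 k0 sY) <= (size sY)%:R * (R2 * F%:R) + M * F%:R.
Proof.
apply: le_trans (H_pair R T0 _ _) _; apply: lerD; last exact: user_cache_ok.
apply: le_trans (H_family R T0 _ _) _; rewrite -sum_const_seq; apply: ler_sum => x _.
apply: le_trans (H_tuple R T0 _) _; exact: n2_le.
Qed.

End Sch.

Lemma card_Ls (h l : nat) : (l <= h)%N -> #|[set i : 'I_h | (i < l)%N]| = l.
Proof.
move=> lh.
have -> : [set i : 'I_h | (i < l)%N] = (widen_ord lh) @: [set: 'I_l].
  apply/setP => i; rewrite inE; apply/idP/imsetP => [il | [j _ ->]]; last exact: (ltn_ord j).
  by exists (Ordinal il) => //; apply: val_inj.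
rewrite card_imset ?cardsT ?card_ord //.
by move=> a b /(congr1 val) /= ab; apply: val_inj.
Qed.

Lemma card_users_sub (h r : nat) (Ls : {set 'I_h}) :
  #|[set u : user h r | val u \subset Ls]| = 'C(#|Ls|, r).
Proof.
rewrite -cards_draws -(card_imset _ val_inj); apply: eq_card => B.
rewrite inE; apply/imsetP/andP => [[u uin ->] | [sub cB]].
  by rewrite inE in uin; split => //; exact: (valP u).
by exists (exist _ B cB : user h r); rewrite ?inE.
Qed.

Lemma x_le_bin (x r : nat) : (0 < r)%N -> (0 < x)%N -> (x <= 'C(x + r - 1, r))%N.
Proof.
case: r => // r _; case: x => // y _.
rewrite addSn subn1 /= addnS.
elim: y => [|y IH]; first by rewrite add0n binn.
rewrite addSn binS.
have : (0 < 'C(y + r.+1, r))%N by rewrite bin_gt0; lia.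
move: IH; rewrite addnS; lia.
Qed.

Lemma bound1 (R : realType) (h r D : nat) (M N R1 R2 : R) (l s : nat) :
  (0 < r)%N -> (r <= l <= h)%N -> (1 <= s <= minn D 'C(l, r))%N ->
  achievable h r D M N R1 R2 ->
  (l%:R)^-1 * (s%:R - (s%:R * M + l%:R * N) / (D %/ s)%:R) <= R1.
Proof.
move=> r0 /andP [rl lh] /andP [s1 sm] ach.
have sD : (s <= D)%N by move: sm; rewrite leq_min => /andP [].
have sC : (s <= 'C(l, r))%N by move: sm; rewrite leq_min => /andP [].
set q := (D %/ s)%N.
have q1 : (0 < q)%N by rewrite divn_gt0.
have qsD : (q * s <= D)%N by rewrite /q leq_divM.
pose Ls := [set i : 'I_h | (i < l)%N].
have cLs : #|Ls| = l by rewrite card_Ls.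
pose A := [set u : user h r | val u \subset Ls].
have sA : (s <= #|A|)%N by rewrite card_users_sub cLs.
pose us (i : 'I_s) : user h r := enum_val (widen_ord sA i).
have us_inj : injective us.
  move=> a b /enum_val_inj /(congr1 val) /= ab; exact: val_inj.
have usL : forall i x, x \in val (us i) -> x \in Ls.
  move=> i x; have := enum_valP (widen_ord sA i); rewrite inE => /subsetP; apply.
have lt_idx : forall (j : 'I_q) (i : 'I_s), (j * s + i < D)%N.
  move=> j i; have := ltn_ord j; have := ltn_ord i.
  have : (j.+1 * s <= q * s)%N by rewrite leq_mul2r ltn_ord orbT.
  move: qsD; nia.
pose sg (p : 'I_q * 'I_s) : 'I_D := Ordinal (lt_idx p.1 p.2).
have sg_inj : injective sg.
  move=> [j i] [j' i'] /(congr1 val) /= e.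
  have s0 : (0 < s)%N by [].
  have ei : i = i' :> nat.
    by have := congr1 (modn^~ s) e; rewrite /= !modnMDl !modn_small.
  have ej : j = j' :> nat.
    have := congr1 (divn^~ s) e; rewrite /= !divnMDl // !divn_small //.
    by rewrite !addn0.
  by congr (_, _); apply: val_inj.
have i0 : 'I_s by exact: Ordinal s1.
pose dd (j : 'I_q) : demand h r D :=
  [ffun u => if [pick i | us i == u] is Some i then sg (j, i) else sg (j, i0)].
have dd_us : forall j i, dd j (us i) = sg (j, i).
  move=> j i; rewrite ffunE; case: pickP => [i' /eqP /us_inj -> // | none].
  by have := none i; rewrite eqxx.
have key : (q * s)%:R <= (q * l)%:R * R1 + l%:R * N + s%:R * M :> R.
  apply: (limit_arg (k := (q * s)%:R)); [exact: ler0n | exact: ler0n |] => eps e0.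
  have [F0 HF] := ach eps e0; exists F0 => F FF0.
  have [sc err] := HF F FF0.
  pose sX := [seq (i, dd j) | j <- enum 'I_q, i <- enum Ls].
  pose sV := enum Ls.
  pose sZ := map us (enum 'I_s).
  have inj : injective (fun p : 'I_q * 'I_s => dd p.1 (us p.2)).
    by move=> [a1 a2] [b1 b2] /=; rewrite !dd_us => /sg_inj.
  have det := phi1_det (sc:=sc) (sX:=sX) (sV:=sV) (sZ:=sZ) (P:=('I_q * 'I_s)%type)
     (k:=fun p => us p.2) (d:=fun p => dd p.1)
     (fun p => map_f us (mem_enum _ p.2))
     (fun p i iu => introT andP (conj (etrans (mem_enum _ _) (usL _ _ iu))
         (allpairs_f (fun j i => (i, dd j)) (mem_enum _ p.1)
            (etrans (mem_enum _ _) (usL _ _ iu))))).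
  have C := scheme_cut inj det (fun p => err _ _).
  have HP := phi1_H sc sX sV sZ.
  rewrite /sX /sV /sZ size_allpairs size_map !size_enum_ord -cardE cLs in HP.
  rewrite card_prod !card_ord in C.
  move: C HP; rewrite -[(q * s * F).+1]addn1 natrD !natrM.
  set X := entropy2 R _; nra.
have qR : 0 < q%:R :> R by rewrite ltr0n.
have lR : 0 < l%:R :> R by rewrite ltr0n (leq_trans r0 rl).
rewrite !natrM in key.
rewrite -subr_ge0.
have -> : R1 - (l%:R)^-1 * (s%:R - (s%:R * M + l%:R * N) / q%:R)
   = (q%:R * l%:R * R1 + l%:R * N + s%:R * M - q%:R * s%:R) / (q%:R * l%:R).
  by field; rewrite !lt0r_neq0.
by rewrite divr_ge0 ?subr_ge0 // mulr_ge0 // ltW.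
Qed.

Lemma bound3 (R : realType) (h r D : nat) (M N R1 R2 : R) :
  (0 < r)%N -> (r < h)%N -> ('C(h, r) <= D)%N ->
  achievable h r D M N R1 R2 ->
  (r%:R)^-1 * (1 - M / D%:R) <= R2.
Proof.
move=> r0 rh CD ach.
have D0 : (0 < D)%N by apply: leq_trans CD; rewrite bin_gt0 ltnW.
have ck : #|[set i : 'I_h | (i < r)%N]| == r by rewrite card_Ls // ltnW.
pose k0 : user h r := exist (fun S : {set 'I_h} => #|S| == r) _ ck.
have ck0 : #|val k0| = r by apply/eqP.
pose dd (j : 'I_D) : demand h r D := [ffun _ => j].
have key : D%:R <= (D * r)%:R * R2 + M :> R.
  apply: (limit_arg (k := D%:R)); [exact: ler0n | exact: ler0n |] => eps e0.
  have [F0 HF] := ach eps e0; exists F0 => F FF0.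
  have [sc err] := HF F FF0.
  pose sY := [seq (i, dd j) | j <- enum 'I_D, i <- enum (val k0)].
  have inj : injective (fun p : 'I_D => dd p k0).
    by move=> a b; rewrite /dd !ffunE.
  have det := phi2_det (sc:=sc) (k0:=k0) (sY:=sY) (P:='I_D) (d:=dd)
     (fun p i ik => allpairs_f (fun j i => (i, dd j)) (mem_enum _ p)
            (etrans (mem_enum _ _) ik)).
  have C := scheme_cut (k := fun _ => k0) inj det (fun p => err _ _).
  have HP := phi2_H sc k0 sY.
  rewrite /sY size_allpairs !size_enum_ord -cardE ck0 in HP.
  rewrite !card_ord in C.
  move: C HP; rewrite -[(D * F).+1]addn1 natrD !natrM.
  set X := entropy2 R _; nra.
have DR : 0 < D%:R :> R by rewrite ltr0n.
have rR : 0 < r%:R :> R by rewrite ltr0n.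
rewrite !natrM in key.
rewrite -subr_ge0.
have -> : R2 - (r%:R)^-1 * (1 - M / D%:R)
   = (D%:R * r%:R * R2 + M - D%:R) / (D%:R * r%:R).
  by field; rewrite !lt0r_neq0.
by rewrite divr_ge0 ?subr_ge0 // mulr_ge0 // ltW.
Qed.

Unset Implicit Arguments. Set Strict Implicit.
Theorem theorem2 (R : realType) (h r D : nat) (M N R1 R2 : R) :
  (0 < r)%N -> (r < h)%N -> ('C(h, r) <= D)%N ->
  0 <= M -> 0 <= N ->
  0 < M + r%:R * N -> M + r%:R * N <= D%:R ->
  achievable h r D M N R1 R2 ->
  (forall l s : nat, (r <= l <= h)%N -> (1 <= s <= minn D 'C(l, r))%N ->
     (l%:R)^-1 * (s%:R - (s%:R * M + l%:R * N) / (D %/ s)%:R) <= R1) /\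
  (forall x : nat, (1 <= x <= minn D 'C(h, r))%N ->
     ((minn (x + r - 1) h)%:R)^-1 *
       (x%:R - (x%:R * M + (minn (x + r - 1) h)%:R * N) / (D %/ x)%:R) <= R1) /\
  (r%:R)^-1 * (1 - M / D%:R) <= R2.
Proof.
move=> r0 rh CD M0 N0 _ _ ach.
split; first by move=> l s hl hs; exact: bound1 r0 hl hs ach.
split; last exact: bound3 r0 rh CD ach.
move=> x /andP [x1 xm].
have xD : (x <= D)%N by move: xm; rewrite leq_min => /andP [].
have xC : (x <= 'C(h, r))%N by move: xm; rewrite leq_min => /andP [].
have r1 := r0.
apply: (bound1 r0 _ _ ach).
  rewrite leq_min geq_minr andbT (ltnW rh) andbT; lia.
rewrite x1 /= leq_min xD /=.
case: (leqP (x + r - 1) h) => hx.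
  exact: x_le_bin.
exact: xC.
Qed.
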